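(* For every $T\ge1$ and every deterministic online algorithm that posts in each round a two-price mechanism $(p_t,q_t)$ with $p_t\le q_t$, there exists an instance with three sellers and three buyers (costs and values in $[0,1]$) on which the algorithm's cumulative gains-from-trade regret over $T$ rounds is at least $T/4$; in particular it is $\Omega(T)$.
   Context: Two-sided market model: sellers have fixed unknown costs $c_i\in[0,1]$, buyers fixed unknown values $v_j\in[0,1]$. In each round the learner posts prices and observes every trader's accept/reject decision; a seller accepts a price $p$ iff $p\ge c_i$, a buyer accepts a price $q$ iff $q\le v_j$ (ties in favour of accepting). A maximum-cardinality matching between accepting sellers and accepting buyers is formed; the GFT of a matching $M$ is $\sum_{(i,j)\in M}(v_j-c_i)$. Benchmark: $\mathrm{GFT}^\star$, the maximum GFT over all matchings. Round-$t$ regret is $\mathrm{GFT}^\star$ minus the minimum GFT over all maximum-cardinality matchings of the traders accepting in round $t$; cumulative regret is the sum over rounds. A two-price mechanism posts a price $p$ to all sellers and a price $q$ to all buyers, with weak budget balance $p\le q$. *)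

(* Defs.v *)
From HB Require Import structures.
From mathcomp Require Import all_boot all_order all_algebra.
From mathcomp Require Import reals.
Set Implicit Arguments. Unset Strict Implicit. Unset Printing Implicit Defensive.
Import Order.TTheory GRing.Theory Num.Theory.
Local Open Scope ring_scope.

Section Market.
Variables (R : realType) (n m : nat).
Variables (c : 'I_n -> R) (v : 'I_m -> R).

Definition is_matching (M : {set 'I_n * 'I_m}) : bool :=
  [forall e1 in M, forall e2 in M,
     ((e1.1 == e2.1) || (e1.2 == e2.2)) ==> (e1 == e2)].

Definition gft (M : {set 'I_n * 'I_m}) : R :=
  \sum_(e in M) (v e.2 - c e.1).

(* benchmark: maximum GFT over all matchings (the empty matching, of GFT 0,
   is always a matching, so 0 is a harmless neutral element) *)
Definition gft_opt : R :=
  \big[Num.max/0]_(M : {set 'I_n * 'I_m} | is_matching M) gft M.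

Definition sellers_acc (p : R) : {set 'I_n} := [set i | c i <= p].
Definition buyers_acc (q : R) : {set 'I_m} := [set j | q <= v j].

Definition feasible (p q : R) (M : {set 'I_n * 'I_m}) : bool :=
  is_matching M && (M \subset setX (sellers_acc p) (buyers_acc q)).

Definition max_card (p q : R) : nat :=
  \max_(M : {set 'I_n * 'I_m} | feasible p q M) #|M|.

Definition max_card_matching (p q : R) (M : {set 'I_n * 'I_m}) : bool :=
  feasible p q M && (#|M| == max_card p q).

(* minimum GFT over all maximum-cardinality matchings of accepting traders
   (this set is nonempty, so the [pick] always succeeds) *)
Definition min_gft_round (p q : R) : R :=
  match [pick M | max_card_matching p q M] with
  | Some M0 => \big[Num.min/gft M0]_(M | max_card_matching p q M) gft M
  | None => 0
  end.

Definition round_regret (p q : R) : R := gft_opt - min_gft_round p q.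

Definition obs := ({ffun 'I_n -> bool} * {ffun 'I_m -> bool})%type.

Definition observe (pq : R * R) : obs :=
  ([ffun i => c i <= pq.1], [ffun j => pq.2 <= v j]).

Definition algorithm := seq obs -> R * R.

Definition budget_balanced (A : algorithm) : Prop :=
  forall h, (A h).1 <= (A h).2.

Fixpoint history (A : algorithm) (t : nat) : seq obs :=
  match t with
  | 0 => [::]
  | t'.+1 => rcons (history A t') (observe (A (history A t')))
  end.

Definition cum_regret (A : algorithm) (T : nat) : R :=
  \sum_(t < T) round_regret (A (history A t)).1 (A (history A t)).2.

End Market.

(* Main.v *)
Require Import Defs.
From mathcomp Require Import all_boot all_order all_algebra.
From mathcomp Require Import reals.
From mathcomp Require Import lra.
Import Order.TTheory GRing.Theory Num.Theory.
Local Open Scope ring_scope.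

Section Gen.
Variables (R : realType) (n m : nat) (c : 'I_n -> R) (v : 'I_m -> R).

Lemma opt_ge M : is_matching M -> gft c v M <= gft_opt c v.
Proof. by move=> hM; rewrite /gft_opt; apply: le_bigmax_cond. Qed.

Lemma min_le_maxcard p q M : max_card_matching c v p q M ->
  min_gft_round c v p q <= gft c v M.
Proof.
move=> hM; rewrite /min_gft_round; case: pickP => [M0 _|/(_ M)]; last by rewrite hM.
exact: bigmin_le_cond.
Qed.

Lemma min_le_some p q : exists M0, feasible c v p q M0 /\
  min_gft_round c v p q <= gft c v M0.
Proof.
rewrite /min_gft_round; case: pickP => [M0 /andP[hf _]|_].
  by exists M0; split => //; apply: bigmin_le_id.
exists set0; split; last by rewrite /gft big_set0.
rewrite /feasible sub0set andbT; apply/forallP => e; apply/implyP; by rewrite inE.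
Qed.

Lemma match_inj1 M : is_matching M -> {in M &, injective (fun e : 'I_n * 'I_m => e.1)}.
Proof.
move=> /forallP hM e1 e2 h1 h2 /= he.
have := hM e1; rewrite h1 /= => /forallP /(_ e2); rewrite h2 he eqxx /=.
by move/eqP.
Qed.

Lemma match_inj2 M : is_matching M -> {in M &, injective (fun e : 'I_n * 'I_m => e.2)}.
Proof.
move=> /forallP hM e1 e2 h1 h2 /= he.
have := hM e1; rewrite h1 /= => /forallP /(_ e2); rewrite h2 he eqxx orbT /=.
by move/eqP.
Qed.

Lemma card_feas p q M : feasible c v p q M -> (#|M| <= #|sellers_acc c p|)%N.
Proof.
move=> /andP[hM hs].
rewrite -(card_in_imset (@match_inj1 M hM)); apply: subset_leq_card.
apply/subsetP => i /imsetP[e he ->]; move/subsetP: hs => /(_ e he).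
by case: e he => a b he; rewrite in_setX => /andP[].
Qed.

Lemma sum_subset (A B : {set 'I_m}) (F : 'I_m -> R) : A \subset B ->
  (forall j, 0 <= F j) -> \sum_(j in A) F j <= \sum_(j in B) F j.
Proof.
move=> hAB hF; rewrite [X in _ <= X](big_setID A) /= (setIidPr hAB).
by rewrite lerDl sumr_ge0.
Qed.

Lemma gft_le_buyers p q M : feasible c v p q M -> (forall i, 0 <= c i) ->
  (forall j, 0 <= v j) -> gft c v M <= \sum_(j in buyers_acc v q) v j.
Proof.
move=> /andP[hM hs] hc hv.
apply: (@le_trans _ _ (\sum_(e in M) v e.2)).
  by rewrite /gft; apply: ler_sum => e _; rewrite lerBlDr lerDl.
rewrite -(big_imset _ (@match_inj2 M hM)) /=; apply: sum_subset => //.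
apply/subsetP => j /imsetP[e he ->]; move/subsetP: hs => /(_ e he).
by case: e he => a b he; rewrite in_setX => /andP[].
Qed.
End Gen.
Arguments opt_ge {R n m c v M}. Arguments min_le_maxcard {R n m c v p q M}.
Arguments min_le_some {R n m} c v p q. Arguments card_feas {R n m c v p q M}.
Arguments sum_subset {R m A B F}. Arguments gft_le_buyers {R n m c v p q M}.

Section Inst.
Variable R : realType.
Definition i0 : 'I_3 := @Ordinal 3 0 isT.
Definition i1 : 'I_3 := @Ordinal 3 1 isT.
Definition i2 : 'I_3 := @Ordinal 3 2 isT.
Definition cc : 'I_3 -> R := fun i => if i == i2 then 1 else 0.
Definition vv (x : R) : 'I_3 -> R := fun j => if j == i0 then 1 else x.

Lemma gft2 (c v : 'I_3 -> R) (a b : 'I_3 * 'I_3) : a != b ->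
  gft c v [set a; b] = (v a.2 - c a.1) + (v b.2 - c b.1).
Proof.
move=> hab; rewrite /gft big_setU1 /=; last by rewrite inE.
by rewrite big_set1.
Qed.

Lemma matching2 (a b : 'I_3 * 'I_3) : a.1 != b.1 -> a.2 != b.2 ->
  is_matching [set a; b].
Proof.
move=> h1 h2; apply/forallP => e1; apply/implyP => /set2P[]->;
  apply/forallP => e2; apply/implyP => /set2P[]->; rewrite ?eqxx ?implybT //.
  by rewrite (negbTE h1) (negbTE h2).
by rewrite eq_sym (negbTE h1) eq_sym (negbTE h2).
Qed.

Lemma cc_ge0 i : 0 <= cc i. Proof. by rewrite /cc; case: ifP. Qed.
Lemma vv_ge0 x j : 0 <= x -> 0 <= vv x j. Proof. by rewrite /vv; case: ifP. Qed.

Lemma regret_bound x p q : 4^-1 <= x -> x <= 3/4 -> p <= q -> q != x ->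
  4^-1 <= round_regret cc (vv x) p q.
Proof.
move=> hx1 hx2 hpq hqx.
have x0 : 0 <= x by apply: le_trans hx1; rewrite invr_ge0.
have hopt : 1 + x <= gft_opt cc (vv x).
  have -> : 1 + x = gft cc (vv x) [set (i0, i0); (i1, i1)].
    by rewrite gft2 // /cc /vv /= !subr0.
  by apply: opt_ge; apply: matching2.
rewrite /round_regret.
have [hq|hq] := ltP x q.
  have [M0 [hf hm]] := min_le_some cc (vv x) p q.
  have hg := gft_le_buyers hf cc_ge0 (fun j => vv_ge0 x j x0).
  have hs : \sum_(j in buyers_acc (vv x) q) vv x j <= \sum_(j in [set i0]) vv x j.
    apply: sum_subset => [|j]; last exact: vv_ge0.
    apply/subsetP => j; rewrite !inE /vv; case: ifP => // _ hj.
    by move: (lt_le_trans hq hj); rewrite ltxx.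
  rewrite big_set1 /vv eqxx in hs.
  have : min_gft_round cc (vv x) p q <= 1 by apply: le_trans hm (le_trans hg hs).
  move=> h; apply: (@le_trans _ _ (1 + x - 1)); first by rewrite addrC addKr.
  by apply: lerB.
have hq' : q < x by rewrite lt_neqAle hqx hq.
have [hp|hp] := ltP p 0.
  have [M0 [hf hm]] := min_le_some cc (vv x) p q.
  have hS : sellers_acc cc p = set0.
    apply/setP => i; rewrite !inE; apply/negbTE; rewrite -ltNge.
    exact: lt_le_trans hp (cc_ge0 i).
  have := card_feas hf; rewrite hS cards0 leqn0 cards_eq0 => /eqP hM0.
  move: hm; rewrite hM0 /gft big_set0 => hm.
  apply: (@le_trans _ _ (1 + x - 0)); last by apply: lerB.
  by rewrite subr0; apply: (le_trans hx1); rewrite lerDr.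
set Mb := [set (i0, i1); (i1, i2)].
have hfb : feasible cc (vv x) p q Mb.
  rewrite /feasible matching2 //=; apply/subsetP => e /set2P[]->;
    rewrite in_setX !inE /cc /vv /=.
    by rewrite hp; apply: ltW.
  by rewrite hp; apply: ltW.
have hmc : max_card_matching cc (vv x) p q Mb.
  rewrite /max_card_matching hfb /= /max_card; apply/eqP/anti_leq/andP; split.
    by apply: (@leq_bigmax_cond _ (fun M => feasible cc (vv x) p q M) (fun M => #|M|) Mb).
  apply/bigmax_leqP => M hM; apply: leq_trans (card_feas hM) _.
  have -> : sellers_acc cc p = [set i0; i1].
    apply/setP => i; rewrite !inE /cc; case: i => [[|[|[|k]]] hk] //=; rewrite ?hp //.
    apply/negbTE; rewrite -ltNge; apply: le_lt_trans hpq _.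
    apply: lt_le_trans hq' _; apply: le_trans hx2 _; rewrite ler_pdivrMr ?ltr0n // mul1r ler_nat.
    by [].
  by rewrite /Mb !cards2.
have := min_le_maxcard hmc; rewrite gft2 // /cc /vv /= !subr0 => hm.
apply: (@le_trans _ _ (1 + x - (x + x))); last by apply: lerB.
lra.
Qed.

Lemma obs_eq (A : algorithm R 3 3) h x y lo hi :
  lo < x < hi -> lo < y < hi -> ~~ (lo < (A h).2 < hi) ->
  observe cc (vv x) (A h) = observe cc (vv y) (A h).
Proof.
move=> /andP[hx1 hx2] /andP[hy1 hy2] hq.
rewrite /observe; congr pair; apply/ffunP => j; rewrite !ffunE /vv.
case: ifP => // _.
set q := (A h).2 in hq *.
have [hql|hql] := leP q lo.
  by rewrite (le_trans hql (ltW hx1)) (le_trans hql (ltW hy1)).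
have hqh : hi <= q by rewrite leNgt; apply: contra hq => ->; rewrite hql.
by apply/idP/idP => h'; [move: (le_trans hqh h') | move: (le_trans hqh h')];
  rewrite leNgt ?hx2 ?hy2.
Qed.

Lemma adv (A : algorithm R 3 3) t : exists lo hi : R,
  [/\ 4^-1 <= lo, lo < hi, hi <= 3/4,
   (forall x y, lo < x < hi -> lo < y < hi ->
      history cc (vv x) A t = history cc (vv y) A t) &
   (forall x s, lo < x < hi -> (s < t)%N ->
      (A (history cc (vv x) A s)).2 != x)].
Proof.
elim: t => [|t [lo [hi [h1 h2 h3 hH hQ]]]].
  exists 4^-1, (3/4); split => //; lra.
set x0 := (lo + hi) / 2.
have hx0 : lo < x0 < hi by apply/andP; split; rewrite /x0; lra.
set q := (A (history cc (vv x0) A t)).2.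
have key : forall lo' hi', lo <= lo' -> hi' <= hi -> ~~ (lo' < q < hi') ->
   forall x y, lo' < x < hi' -> lo' < y < hi' ->
      history cc (vv x) A t.+1 = history cc (vv y) A t.+1.
  move=> lo' hi' hl hh hq x y hx hy.
  have hx' : lo < x < hi by move: hx => /andP[a b]; apply/andP; split; lra.
  have hy' : lo < y < hi by move: hy => /andP[a b]; apply/andP; split; lra.
  rewrite /= (hH x x0 hx' hx0) (hH y x0 hy' hx0).
  by congr rcons; apply: (@obs_eq A _ x y lo' hi' hx hy).
have keyQ : forall lo' hi', lo <= lo' -> hi' <= hi -> ~~ (lo' < q < hi') ->
   forall x s, lo' < x < hi' -> (s < t.+1)%N ->
      (A (history cc (vv x) A s)).2 != x.
  move=> lo' hi' hl hh hq x s hx hs.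
  have hx' : lo < x < hi by move: hx => /andP[a b]; apply/andP; split; lra.
  rewrite ltnS leq_eqVlt in hs; case/orP: hs => [/eqP ->|hs]; last exact: hQ.
  rewrite (hH x x0 hx' hx0) -/q; apply: contra hq => /eqP ->; exact: hx.
case hin: (lo < q < hi).
  move: hin => /andP[hq1 hq2].
  exists lo, q; split => //; [lra| apply: key | apply: keyQ] => //;
    try lra; by rewrite ltxx andbF.
exists lo, hi; split => //; [apply: key | apply: keyQ] => //; by rewrite hin.
Qed.
End Inst.
Arguments cc {R}. Arguments vv {R}.

Theorem theorem4p4 (R : realType) (T : nat) (hT : (1 <= T)%N)
  (A : algorithm R 3 3) (hA : budget_balanced A) :
  exists (c : 'I_3 -> R) (v : 'I_3 -> R),
    (forall i, 0 <= c i <= 1) /\ (forall j, 0 <= v j <= 1) /\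
    T%:R / 4 <= cum_regret c v A T.
Proof.
have [lo [hi [h1 h2 h3 hH hQ]]] := @adv R A T.
set x := (lo + hi) / 2.
have hx : lo < x < hi by apply/andP; split; rewrite /x; lra.
exists cc, (vv x); split; [|split].
- by move=> i; rewrite /cc; case: ifP => _; rewrite ?lexx ?ler01.
- move=> j; rewrite /vv; case: ifP => _; rewrite ?lexx ?ler01 //.
  apply/andP; split; rewrite /x; lra.
rewrite /cum_regret.
apply: (@le_trans _ _ (\sum_(t < T) (4^-1 : R))).
  rewrite sumr_const card_ord. have -> : (4^-1 : R) *+ T = T%:R / 4 by rewrite mulrC mulr_natr. by [].
apply: ler_sum => t _; apply: (@regret_bound R); rewrite /x; try lra.
  exact: hA.
exact: hQ.
Qed.
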